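(* Let $(b,c)$ be a connected graph over a countable set $X$, $G$ a nilpotent group acting cocompactly on $X$ with $H_{b,c}$ $G$-invariant, and $x_0\in X$. Let $R$ be a normal subgroup of $G$ and $Q(R)=\pi^{-1}(Z(G/R))$ with $\pi:G\to G/R$ the projection. Then every harmonic $k\in\mathrm{ex}\,\mathcal{K}^R$ is $Q(R)$-multiplicative.
   Context: A graph over $X$ is $(b,c)$ with $b:X\times X\to[0,\infty)$, $c:X\to\mathbb{R}$, $\sum_yb(x,y)<\infty$ ($b$ need not be symmetric); connected: any two points are joined by a finite sequence $y_1,\dots,y_n$ with $b(y_i,y_{i+1})>0$. $H_{b,c}f(x)=\sum_yb(x,y)(f(x)-f(y))+c(x)f(x)$ on $\mathrm{Dom}(H)=\{f:\sum_yb(x,y)|f(y)|<\infty\ \forall x\}$; harmonic: $Hf=0$; $\mathcal{H}^+$: nonnegative nonzero harmonic functions. $T_gf(x)=f(g^{-1}x)$; cocompact: $GV=X$ for some finite $V$; $H$ is $G$-invariant if $T_g$ preserves $\mathrm{Dom}(H)$ and $HT_g=T_gH$. $\mathcal{K}$ is the closure in $C(X)$ (product topology) of $\{f\in\mathcal{H}^+:f(x_0)=1\}$, $\mathcal{K}^R=\{f\in\mathcal{K}:T_rf=f\ \forall r\in R\}$, $\mathrm{ex}$ = extreme points. For a subgroup $S$, $f$ is $S$-multiplicative if there is a homomorphism $\gamma:S\to(0,\infty)$ with $T_gf=\gamma(g^{-1})f$ for all $g\in S$. *)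

(* Defs.v *)
From HB Require Import structures.
From mathcomp Require Import all_boot all_order all_algebra.
From mathcomp Require Import all_classical all_reals all_analysis.
From mathcomp Require Import monoid.
Set Implicit Arguments.
Unset Strict Implicit.
Unset Printing Implicit Defensive.
Import Order.TTheory GRing.Theory Num.Theory.
Import numFieldNormedType.Exports.
Local Open Scope classical_set_scope.
Local Open Scope ring_scope.

Definition is_subgroup (G : groupType) (S : set G) : Prop :=
  S 1%g /\ (forall x y, S x -> S y -> S (x * y^-1)%g).

Definition is_normal_subgroup (G : groupType) (N : set G) : Prop :=
  is_subgroup N /\ (forall x g, N x -> N (x ^ g)%g).

Inductive gen_subgroup (G : groupType) (A : set G) : G -> Prop :=
| gen_in a : A a -> gen_subgroup A a
| gen_one : gen_subgroup A 1%g
| gen_mul x y : gen_subgroup A x -> gen_subgroup A y -> gen_subgroup A (x * y)%g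
| gen_inv x : gen_subgroup A x -> gen_subgroup A (x^-1)%g.

Fixpoint lcs (G : groupType) (n : nat) : set G :=
  match n with
  | 0 => setT
  | n'.+1 => gen_subgroup (fun z => exists x g, @lcs G n' x /\ z = [~ x, g]%g)
  end.

Definition nilpotent_group (G : groupType) : Prop :=
  exists n, forall x : G, @lcs G n x -> x = 1%g.

(* Q(N) = pi^{-1}(Z(G/N)): g such that pi(g) commutes with every pi(h),
   i.e. [g,h] in N for all h *)
Definition Qpre (G : groupType) (N : set G) : set G :=
  [set g | forall h, N [~ g, h]%g].

Definition is_action (G : groupType) (X : Type) (act : G -> X -> X) : Prop :=
  (forall x, act 1%g x = x) /\
  (forall g h x, act (g * h)%g x = act g (act h x)).

Definition Tg (G : groupType) (X : Type) (R : Type) (act : G -> X -> X)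
  (g : G) (f : X -> R) : X -> R := fun x => f (act (g^-1)%g x).

Definition cocompact (G : groupType) (X : eqType) (act : G -> X -> X) : Prop :=
  exists V : seq X, forall x, exists g v, v \in V /\ x = act g v.

Definition is_graph (R : realType) (X : countType) (b : X -> X -> R) : Prop :=
  (forall x y, 0 <= b x y) /\
  (forall x, (\esum_(y in [set: X]) (b x y)%:E < +oo)%E).

Definition graph_connected (R : realType) (X : countType) (b : X -> X -> R) : Prop :=
  forall x y : X, exists s : seq X,
    path (fun u v => 0 < b u v) x s /\ last x s = y.

Definition DomH (R : realType) (X : countType) (b : X -> X -> R) (f : X -> R) : Prop :=
  forall x, (\esum_(y in [set: X]) (b x y * `|f y|)%:E < +oo)%E.

Definition rsum (R : realType) (X : countType) (g : X -> R) : R :=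
  fine (\esum_(y in [set: X]) (Num.max (g y) 0)%:E) -
  fine (\esum_(y in [set: X]) (Num.max (- g y) 0)%:E).

Definition Hop (R : realType) (X : countType) (b : X -> X -> R) (c : X -> R)
  (f : X -> R) : X -> R :=
  fun x => rsum (fun y => b x y * (f x - f y)) + c x * f x.

Definition harmonic_fn (R : realType) (X : countType) (b : X -> X -> R) (c : X -> R)
  (f : X -> R) : Prop :=
  DomH b f /\ (forall x, Hop b c f x = 0).

Definition Hplus (R : realType) (X : countType) (b : X -> X -> R) (c : X -> R) :
  set (X -> R) :=
  [set f | harmonic_fn b c f /\ (forall x, 0 <= f x) /\ (exists x, f x != 0)].

Definition G_invariant (R : realType) (X : countType) (G : groupType)
  (act : G -> X -> X) (b : X -> X -> R) (c : X -> R) : Prop :=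
  forall g f, DomH b f ->
    DomH b (Tg act g f) /\ Hop b c (Tg act g f) = Tg act g (Hop b c f).

Definition Kset (R : realType) (X : countType) (b : X -> X -> R) (c : X -> R)
  (x0 : X) : set (X -> R) :=
  closure ([set f | Hplus b c f /\ f x0 = 1] : set {ptws X -> R}).

Definition KsetR (R : realType) (X : countType) (G : groupType)
  (act : G -> X -> X) (b : X -> X -> R) (c : X -> R) (x0 : X) (N : set G) :
  set (X -> R) :=
  [set f | Kset b c x0 f /\ (forall r, N r -> Tg act r f = f)].

Definition extreme_point (R : realType) (X : Type) (S : set (X -> R)) (k : X -> R)
  : Prop :=
  S k /\ forall f1 f2 (t : R), S f1 -> S f2 -> 0 < t < 1 ->
    (forall x, k x = t * f1 x + (1 - t) * f2 x) -> f1 = f2.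

Definition multiplicative_on (R : realType) (X : Type) (G : groupType)
  (act : G -> X -> X) (S : set G) (f : X -> R) : Prop :=
  exists gamma : G -> R,
    (forall g, S g -> 0 < gamma g) /\
    (forall g h, S g -> S h -> gamma (g * h)%g = gamma g * gamma h) /\
    (forall g, S g -> Tg act g f = (fun x => gamma (g^-1)%g * f x)).

(* Main.v *)
Require Import Defs.
From HB Require Import structures.
From mathcomp Require Import all_boot all_order all_algebra.
From mathcomp Require Import all_classical all_reals all_analysis.
From mathcomp Require Import monoid ring lra.
Set Implicit Arguments.
Unset Strict Implicit.
Unset Printing Implicit Defensive.
Import Order.TTheory GRing.Theory Num.Theory.
Import numFieldNormedType.Exports.

Section EsumFacts.
Local Open Scope classical_set_scope.
Local Open Scope ring_scope.
Variables (R : realType) (X : countType).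
Implicit Types (p q : X -> R).

Definition fin_sum p := (\esum_(y in [set: X]) (p y)%:E < +oo)%E.
Definition S p : R := fine (\esum_(y in [set: X]) (p y)%:E).

Lemma esum_scale (r : R) (a : X -> \bar R) : 0 <= r -> (forall i, 0 <= a i)%E ->
  (\esum_(i in [set: X]) (r%:E * a i) = r%:E * \esum_(i in [set: X]) a i)%E.
Proof.
move=> r0 a0; rewrite /esum -ereal_supZl//.
  congr ereal_sup; rewrite image_comp; apply: eq_imagel => A _ /=.
by rewrite ge0_mule_fsumr.
apply/set0P; exists 0%E; exists set0; first exact: fsets_set0.
by rewrite fsbig_set0.
Qed.

Lemma esum_fin p : (forall y, 0 <= p y) -> fin_sum p ->
  \esum_(y in [set: X]) (p y)%:E = (S p)%:E.
Proof.
move=> p0 fp; have h0 : (0 <= \esum_(y in [set: X]) (p y)%:E)%E.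
  by apply: esum_ge0 => y _; rewrite lee_fin.
by rewrite /S fineK// ge0_fin_numE.
Qed.

Lemma S_ge0 p : (forall y, 0 <= p y) -> 0 <= S p.
Proof. by move=> p0; rewrite /S fine_ge0//; apply: esum_ge0 => y _; rewrite lee_fin. Qed.

Lemma fin_le p q : (forall y, 0 <= p y) -> (forall y, p y <= q y) -> fin_sum q ->
  fin_sum p /\ S p <= S q.
Proof.
move=> p0 pq fq.
have le : (\esum_(y in [set: X]) (p y)%:E <= \esum_(y in [set: X]) (q y)%:E)%E.
  by apply: le_esum => y _; rewrite lee_fin.
have fp : fin_sum p by exact: le_lt_trans fq.
split=> //.
have q0 : forall y, 0 <= q y by move=> y; exact: le_trans (pq y).
by move: le; rewrite (esum_fin p0 fp) (esum_fin q0 fq) lee_fin.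
Qed.

Lemma S_single p y : (forall y, 0 <= p y) -> fin_sum p -> p y <= S p.
Proof.
move=> p0 fp; rewrite -lee_fin -(esum_fin p0 fp).
rewrite (esumID [set y]) ?setTI; last by move=> z _; rewrite lee_fin.
rewrite esum_set1 ?lee_fin// leeDl//.
by apply: esum_ge0 => z _; rewrite lee_fin.
Qed.

Lemma fin_add p q : (forall y, 0 <= p y) -> (forall y, 0 <= q y) ->
  fin_sum p -> fin_sum q -> fin_sum (fun y => p y + q y) /\ S (fun y => p y + q y) = S p + S q.
Proof.
move=> p0 q0 fp fq.
have E : \esum_(y in [set: X]) ((p y + q y)%:E) = (S p + S q)%:E.
  rewrite (eq_esum (b := fun y => ((p y)%:E + (q y)%:E)%E)) //.
  by rewrite esumD ?(esum_fin p0 fp) ?(esum_fin q0 fq)// => y _; rewrite lee_fin.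
by rewrite /fin_sum /S E; split => //; rewrite ltry.
Qed.

Lemma fin_scale r p : 0 <= r -> (forall y, 0 <= p y) -> fin_sum p ->
  fin_sum (fun y => r * p y) /\ S (fun y => r * p y) = r * S p.
Proof.
move=> r0 p0 fp.
have E : \esum_(y in [set: X]) ((r * p y)%:E) = (r * S p)%:E.
  rewrite (eq_esum (b := fun y => (r%:E * (p y)%:E)%E)) //.
  by rewrite esum_scale ?(esum_fin p0 fp)// => y; rewrite lee_fin.
by rewrite /fin_sum /S E; split => //; rewrite ltry.
Qed.


Lemma S_ext p q : (forall y, p y = q y) -> S p = S q.
Proof. by move=> e; congr S; apply: funext. Qed.

Lemma maxpos_id (a b : R) : Num.max (a - b) 0 + b = a + Num.max (- (a - b)) 0.
Proof.
have [h|h] := leP a b.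
  rewrite (@max_r _ _ (a - b)) ?subr_le0// (@max_l _ _ (- (a - b))) ?oppr_ge0 ?subr_le0//.
  by rewrite opprB add0r addrC subrK.
rewrite (@max_l _ _ (a - b)) ?subr_ge0 ?ltW// (@max_r _ _ (- (a - b))) ?oppr_le0 ?subr_ge0 ?ltW//.
by rewrite subrK addr0.
Qed.

Lemma rsum_diff (phi p q : X -> R) : (forall y, 0 <= p y) -> (forall y, 0 <= q y) ->
  fin_sum p -> fin_sum q -> (forall y, phi y = p y - q y) ->
  rsum phi = S p - S q.
Proof.
move=> p0 q0 fp fq e.
set P := fun y => Num.max (phi y) 0.
set M := fun y => Num.max (- phi y) 0.
have P0 : forall y, 0 <= P y by move=> y; rewrite /P le_max lexx orbT.
have M0 : forall y, 0 <= M y by move=> y; rewrite /M le_max lexx orbT.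
have [fP _] : fin_sum P /\ S P <= S p.
  apply: fin_le => // y; rewrite /P e ge_max p0 andbT lerBlDr lerDl//.
have [fM _] : fin_sum M /\ S M <= S q.
  apply: fin_le => // y; rewrite /M e ge_max q0 andbT opprB lerBlDr lerDl//.
have [_ E1] := fin_add P0 q0 fP fq.
have [_ E2] := fin_add p0 M0 fp fM.
have E : S (fun y => P y + q y) = S (fun y => p y + M y).
  by apply: S_ext => y; rewrite /P /M e maxpos_id.
rewrite E1 E2 in E.
rewrite /rsum -/(S P) -/(S M).
by apply/eqP; rewrite subr_eq addrAC -E addrK.
Qed.

End EsumFacts.

Section Harm.
Local Open Scope classical_set_scope.
Local Open Scope ring_scope.
Variables (R : realType) (X : countType) (b : X -> X -> R) (c : X -> R).
Hypothesis gb : is_graph b.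

Lemma fin_ext (p q : X -> R) : fin_sum p -> (forall y, p y = q y) -> fin_sum q.
Proof. by move=> fp e; have <- : p = q by apply: funext. Qed.

Lemma b0 x y : 0 <= b x y. Proof. by case: gb. Qed.
Lemma fb x : fin_sum (b x). Proof. by case: gb => _ h; exact: h. Qed.

Lemma fbf f x : DomH b f -> (forall y, 0 <= f y) -> fin_sum (fun y => b x y * f y).
Proof.
move=> D f0; apply: (fin_ext (D x)) => y /=; by rewrite ger0_norm.
Qed.

Lemma Hop_nonneg f x : DomH b f -> (forall y, 0 <= f y) ->
  Hop b c f x = f x * S (b x) - S (fun y => b x y * f y) + c x * f x.
Proof.
move=> D f0; rewrite /Hop.
have [fp Sp] := fin_scale (f0 x) (b0 x) (fb x).
rewrite (@rsum_diff _ _ _ (fun y => f x * b x y) (fun y => b x y * f y)) //.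
- by rewrite Sp.
- by move=> y; rewrite mulr_ge0 // b0.
- by move=> y; rewrite mulr_ge0 // b0.
- exact: fbf.
- by move=> y; rewrite mulrBr mulrC.
Qed.

Lemma harm_eq f x : harmonic_fn b c f -> (forall y, 0 <= f y) ->
  S (fun y => b x y * f y) = (S (b x) + c x) * f x.
Proof.
move=> [D H] f0; have := H x; rewrite Hop_nonneg // => E.
lra.
Qed.

Lemma harnack f x y : harmonic_fn b c f -> (forall y, 0 <= f y) -> 0 < b x y ->
  f y <= ((S (b x) + c x) / b x y) * f x.
Proof.
move=> hf f0 bp.
have := S_single y (fun z => mulr_ge0 (b0 x z) (f0 z)) (fbf x hf.1 f0).
rewrite harm_eq // => le.
by rewrite mulrAC ler_pdivlMr // mulrC.
Qed.

Lemma harm_comb f g h (al be : R) : harmonic_fn b c f -> harmonic_fn b c g ->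
  (forall y, 0 <= f y) -> (forall y, 0 <= g y) -> (forall y, 0 <= h y) ->
  0 <= al -> 0 <= be -> (forall y, h y + be * g y = al * f y) ->
  harmonic_fn b c h.
Proof.
move=> hf hg f0 g0 h0 al0 be0 e.
have bh0 : forall x y, 0 <= b x y * h y by move=> x y; rewrite mulr_ge0 // b0.
have bg0 : forall x y, 0 <= be * (b x y * g y) by move=> x y; rewrite !mulr_ge0 // b0.
have key : forall x, fin_sum (fun y => b x y * h y) /\
    S (fun y => b x y * h y) = (S (b x) + c x) * h x.
  move=> x.
  have [fa Sa] := fin_scale al0 (fun z => mulr_ge0 (b0 x z) (f0 z)) (fbf x hf.1 f0).
  have fh : fin_sum (fun y => b x y * h y).
    apply: (proj1 (fin_le (bh0 x) _ fa)) => y.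
    have := e y; have := bg0 x y => bg e'.
    have -> : al * (b x y * f y) = b x y * h y + be * (b x y * g y).
      by rewrite mulrCA -e' mulrDr mulrCA.
    by rewrite lerDl.
  split => //.
  have [fg Sg] := fin_scale be0 (fun z => mulr_ge0 (b0 x z) (g0 z)) (fbf x hg.1 g0).
  have [_ Ssum] := fin_add (bh0 x) (bg0 x) fh fg.
  have : S (fun y => b x y * h y + be * (b x y * g y)) = S (fun y => al * (b x y * f y)).
    by apply: S_ext => y; rewrite [RHS]mulrCA -e mulrDr [in X in _ = _ + X]mulrCA.
  rewrite Ssum Sg Sa (harm_eq x hf f0) (harm_eq x hg g0) => E.
  have := e x => E'.
  have -> : h x = al * f x - be * g x by rewrite -E' addrK.
  lra.
have D : DomH b h.
  move=> x; apply: (fin_ext (key x).1) => y /=; by rewrite ger0_norm.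
split => // x; rewrite Hop_nonneg // (key x).2; ring.
Qed.


Lemma harnack1 x y : 0 < b x y -> exists D, 0 < D /\
  forall f, harmonic_fn b c f -> (forall z, 0 <= f z) -> f y <= D * f x.
Proof.
move=> bp; exists (Num.max ((S (b x) + c x) / b x y) 1); split.
  by rewrite lt_max ltr01 orbT.
move=> f hf f0; apply: (le_trans (harnack hf f0 bp)).
by apply: ler_wpM2r; [exact: f0 | rewrite le_max lexx].
Qed.

Lemma chain x s : path (fun u v => 0 < b u v) x s -> exists C, 0 < C /\
  forall f, harmonic_fn b c f -> (forall z, 0 <= f z) -> f (last x s) <= C * f x.
Proof.
elim: s x => [|y s IH] x /=.
  by move=> _; exists 1; split => // f _ _; rewrite mul1r.
move=> /andP[bxy p]; have [C [C0 HC]] := IH y p.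
have [D [D0 HD]] := harnack1 bxy.
exists (C * D); split; first exact: mulr_gt0.
move=> f hf f0; apply: (le_trans (HC f hf f0)).
by rewrite -mulrA; apply: ler_wpM2l; [exact: ltW | exact: HD].
Qed.

End Harm.

Section Clo.
Local Open Scope classical_set_scope.
Local Open Scope ring_scope.
Variables (R : realType) (X : countType).

Lemma closure_eval (A : set {ptws X -> R}) (x : X) (C : set R) : closed C ->
  (forall f, A f -> C (f x)) -> forall f, closure A f -> C (f x).
Proof.
move=> cC AC f cf.
have cl : closed (((@proj X (fun _ => R) x) @^-1` C) : set {ptws X -> R}).
  apply: preimage_closed => //= g _; exact: proj_continuous.
have sub : A `<=` (((@proj X (fun _ => R) x) @^-1` C) : set {ptws X -> R}) by move=> g /AC.
have := closureS sub cf; rewrite -(proj1 (closure_id _) cl); done.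
Qed.
End Clo.

Lemma grp1 (G : groupType) (g a : G) : (g^-1 * a = [~ g, a^-1] * (a * g^-1))%g.
Proof.
rewrite /commg /conjg invgK !mulgA mulgVK.
by rewrite mulgK.
Qed.

Lemma grp2 (G : groupType) (g r : G) : (g^-1 * r^-1 = (r ^ g)^-1 * g^-1)%g.
Proof.
by rewrite /conjg !invgM invgK mulgK.
Qed.

Section Main.
Local Open Scope classical_set_scope.
Local Open Scope ring_scope.
Variables (R : realType) (X : countType) (G : groupType)
  (b : X -> X -> R) (c : X -> R) (act : G -> X -> X) (x0 : X) (N : set G).
Hypotheses (gb : is_graph b) (conn : graph_connected b) (hact : is_action act)
  (Ginv : G_invariant act b c) (hN : is_normal_subgroup N) (hcc : cocompact act).
Variable k : X -> R.
Hypotheses (hk : harmonic_fn b c k) (ek : extreme_point (KsetR act b c x0 N) k).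

Lemma act1 x : act 1%g x = x. Proof. by case: hact. Qed.
Lemma actM g h x : act (g * h)%g x = act g (act h x). Proof. by case: hact. Qed.

Lemma Nk r : N r -> forall z, k (act r^-1%g z) = k z.
Proof. by move=> Nr z; have := (proj2 ek.1) r Nr => /(congr1 (fun f => f z)). Qed.

Lemma kN m : N m -> forall z, k (act m z) = k z.
Proof.
move=> Nm z; have Nm' : N (m^-1)%g.
  by have := (proj2 hN.1) 1%g m (proj1 hN.1) Nm; rewrite mul1g.
by have := Nk Nm' z; rewrite invgK.
Qed.

Lemma k_ge0 x : 0 <= k x.
Proof.
have := ek.1.1; rewrite /Kset; apply: (@closure_eval R X _ x [set r : R | 0 <= r]).
  exact: closed_ge.
by move=> f [[_ [f0 _]] _]; exact: f0.
Qed.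

Lemma kx0 : k x0 = 1.
Proof.
have := ek.1.1; rewrite /Kset; apply: (@closure_eval R X _ x0 [set r : R | r = 1]).
  exact: closed_eq.
by move=> f [_ ->].
Qed.

Lemma harmT g f : harmonic_fn b c f -> harmonic_fn b c (Tg act g f).
Proof.
move=> [D H]; have [D' H'] := Ginv g D; split => // x.
by rewrite H' /Tg H.
Qed.

Lemma harm_tr a : harmonic_fn b c (fun x => k (act a x)).
Proof.
have -> : (fun x => k (act a x)) = Tg act (a^-1)%g k.
  by apply: funext => x; rewrite /Tg invgK.
exact: harmT.
Qed.

Lemma cmp v w : exists C, 0 < C /\ forall a, k (act a w) <= C * k (act a v).
Proof.
have [s [p <-]] := conn v w.
have [C [C0 HC]] := chain c gb p.
exists C; split => // a; apply: (HC (fun x => k (act a x))).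
  exact: harm_tr.
by move=> z; exact: k_ge0.
Qed.

Lemma cmp_seq (s : seq X) (F : X -> X) : exists C, 0 < C /\
  forall v, v \in s -> forall a, k (act a (F v)) <= C * k (act a v).
Proof.
elim: s => [|v s [C [C0 HC]]].
  by exists 1; split => // v; rewrite in_nil.
have [D [D0 HD]] := cmp v (F v).
exists (Num.max C D); split; first by rewrite lt_max C0.
move=> w; rewrite in_cons => /orP[/eqP -> | ws] a.
  apply: (le_trans (HD a)); apply: ler_wpM2r; first exact: k_ge0.
  by rewrite le_max lexx orbT.
apply: (le_trans (HC w ws a)); apply: ler_wpM2r; first exact: k_ge0.
by rewrite le_max lexx.
Qed.


Lemma kpos y : 0 < k y.
Proof.
have [C [C0 HC]] := cmp y x0.
have := HC 1%g; rewrite !act1 kx0 => h.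
have : 0 < C * k y by exact: lt_le_trans ltr01 h.
by rewrite pmulr_rgt0.
Qed.

Lemma boundQ g : Qpre N g -> exists C1, 0 < C1 /\
  forall x, k (act g^-1%g x) <= C1 * k x.
Proof.
move=> Qg; have [V HV] := hcc.
have [C [C0 HC]] := cmp_seq V (fun v => act g^-1%g v).
exists C; split => // x.
have [a [v [vV ->]]] := HV x.
rewrite -actM grp1 actM (kN (Qg a^-1%g)) actM.
exact: HC.
Qed.

Lemma uN g r : N r -> forall x, k (act g^-1%g (act r^-1%g x)) = k (act g^-1%g x).
Proof.
move=> Nr x; rewrite -actM grp2 actM Nk //.
exact: (proj2 hN).
Qed.

Lemma inK f : harmonic_fn b c f -> (forall x, 0 <= f x) -> f x0 = 1 ->
  (forall r, N r -> forall x, f (act r^-1%g x) = f x) -> KsetR act b c x0 N f.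
Proof.
move=> hf f0 f1 fN; split.
  rewrite /Kset; apply: subset_closure; split => //; split => //; split => //.
  by exists x0; rewrite f1 oner_neq0.
by move=> r Nr; apply: funext => x; rewrite /Tg fN.
Qed.

Lemma propQ g : Qpre N g -> forall x, k (act g^-1%g x) = k (act g^-1%g x0) * k x.
Proof.
move=> Qg.
have [C1 [C10 HC1]] := boundQ Qg.
pose u := fun x => k (act g^-1%g x).
have hu : harmonic_fn b c u.
  by have := harmT g hk; congr harmonic_fn.
have u0 : forall x, 0 <= u x by move=> x; exact: k_ge0.
have ux0 : 0 < u x0 by exact: kpos.
pose e := (C1^-1 / 2).
have e0 : 0 < e by rewrite divr_gt0 // invr_gt0.
have eC : e * C1 = 1 / 2 by rewrite /e mulrAC mulVf ?gt_eqF.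
pose w := fun x => k x - e * u x.
have wge : forall x, k x / 2 <= w x.
  move=> x; rewrite /w.
  have : e * u x <= e * (C1 * k x) by apply: ler_wpM2l; [exact: ltW | exact: HC1].
  rewrite mulrA eC => h.
  have := k_ge0 x; lra.
have w0 : forall x, 0 <= w x.
  by move=> x; apply: le_trans (wge x); rewrite divr_ge0 // k_ge0.
have wx0 : 0 < w x0 by apply: lt_le_trans (wge x0); rewrite kx0; lra.
have hw : harmonic_fn b c w.
  apply: (harm_comb gb hk hu k_ge0 u0 w0 (al := 1) (be := e)) => //.
    exact: ltW.
  by move=> y; rewrite /w mul1r subrK.
pose f1 := fun x => (u x0)^-1 * u x.
pose f2 := fun x => (w x0)^-1 * w x.
have hf1 : harmonic_fn b c f1.
  apply: (harm_comb gb hu hu u0 u0 _ (al := (u x0)^-1) (be := 0)) => //.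
  - by move=> y; rewrite /f1 mulr_ge0 // invr_ge0 ltW.
  - by rewrite invr_ge0 ltW.
  - by move=> y; rewrite mul0r addr0.
have hf2 : harmonic_fn b c f2.
  apply: (harm_comb gb hw hw w0 w0 _ (al := (w x0)^-1) (be := 0)) => //.
  - by move=> y; rewrite /f2 mulr_ge0 // invr_ge0 ltW.
  - by rewrite invr_ge0 ltW.
  - by move=> y; rewrite mul0r addr0.
have K1 : KsetR act b c x0 N f1.
  apply: inK => //.
  - by move=> y; rewrite /f1 mulr_ge0 // invr_ge0 ltW.
  - by rewrite /f1 mulVf ?gt_eqF.
  - by move=> r Nr x; rewrite /f1 /u uN.
have K2 : KsetR act b c x0 N f2.
  apply: inK => //.
  - by move=> y; rewrite /f2 mulr_ge0 // invr_ge0 ltW.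
  - by rewrite /f2 mulVf ?gt_eqF.
  - by move=> r Nr x; rewrite /f2 /w /u /= (uN _ Nr) (Nk Nr).
pose t := e * u x0.
have t0 : 0 < t by rewrite mulr_gt0.
have tw : 1 - t = w x0 by rewrite /w kx0.
have t1 : t < 1 by rewrite -subr_gt0 tw.
have dec : forall x, k x = t * f1 x + (1 - t) * f2 x.
  move=> x; rewrite tw /f1 /f2 /t /=; have ne1 := lt0r_neq0 ux0; have ne2 := lt0r_neq0 wx0.
  rewrite mulrA -(mulrA e) mulfV // mulr1 mulrA mulfV // mul1r /w /=; lra.
have tt : 0 < t < 1 by rewrite t0 t1.
have e12 := ek.2 f1 f2 t K1 K2 tt dec.
move=> x; have := dec x; rewrite -e12 -mulrDl subrKC mul1r /f1 => ->.
by rewrite mulrA mulfV ?gt_eqF // mul1r.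
Qed.


Lemma final : multiplicative_on act (Qpre N) k.
Proof.
have fwd : forall g, Qpre N g -> forall y, k (act g y) = k (act g x0) * k y.
  move=> g Qg.
  have E1 : forall y, k y = k (act g^-1%g x0) * k (act g y).
    by move=> y; rewrite -propQ // -actM mulVg act1.
  have E2 := E1 x0; rewrite kx0 in E2.
  move=> y; rewrite [in RHS](E1 y) mulrA [k (act g x0) * _]mulrC -E2 mul1r.
  done.
exists (fun h => k (act h x0)); split; [|split].
- by move=> g _; exact: kpos.
- by move=> g h Qg Qh; rewrite actM fwd.
- by move=> g Qg; apply: funext => x; rewrite /Tg propQ.
Qed.

End Main.

Theorem lemma5 (R : realType) (X : countType) (G : groupType)
  (b : X -> X -> R) (c : X -> R) (act : G -> X -> X) (x0 : X) (N : set G) :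
  is_graph b -> graph_connected b ->
  is_action act -> nilpotent_group G -> cocompact act ->
  G_invariant act b c ->
  is_normal_subgroup N ->
  forall k : X -> R, harmonic_fn b c k ->
    extreme_point (KsetR act b c x0 N) k ->
    multiplicative_on act (Qpre N) k.
Proof.
move=> gb conn hact _ hcc Ginv hN k hk ek.
exact: (final gb conn hact Ginv hN hcc hk ek).
Qed.
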